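(* Let $\Gamma$ be a group that is the directed union of a directed family $(\Gamma_i)_{i\in I}$ of subgroups. Let $n \in \mathbb{N}$, suppose $\operatorname{H}^n_b(\Gamma_i;\mathbb{R}) \cong 0$ for all $i \in I$, and suppose there is a finite constant $K$ bounding the $n$-th vanishing moduli of all $\Gamma_i$. Then $\operatorname{H}^n_b(\Gamma;\mathbb{R}) \cong 0$.
   Context: $\operatorname{C}^n_b(G;\mathbb{R}) = \ell^\infty(G^{n+1})^G$ (bounded real functions invariant under the diagonal action) with supremum norm $|\cdot|_\infty$ and homogeneous coboundary $\delta^n_b$; $\operatorname{H}^*_b(G;\mathbb{R})$ is its cohomology. If $\operatorname{H}^n_b(G;\mathbb{R})\cong 0$, the $n$-th vanishing modulus of $G$ is the minimal $K \in \mathbb{R}_{\geq 0}\cup\{\infty\}$ such that for every $c \in \ker \delta^n_b$ there is $b \in \operatorname{C}^{n-1}_b(G;\mathbb{R})$ with $\delta^{n-1}_b(b) = c$ and $|b|_\infty \leq K |c|_\infty$. *)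

(* Defs.v *)
From Stdlib Require Import Reals.
From Coquelicot Require Import Coquelicot.
From mathcomp Require Import ssreflect ssrfun ssrbool eqtype ssrnat seq fintype bigop.

Set Implicit Arguments.
Unset Strict Implicit.
Unset Printing Implicit Defensive.

Record group := Group {
  carrier :> Type;
  gmul : carrier -> carrier -> carrier;
  gone : carrier;
  ginv : carrier -> carrier;
  gmulA : forall x y z, gmul x (gmul y z) = gmul (gmul x y) z;
  gmul1 : forall x, gmul gone x = x;
  gmulV : forall x, gmul (ginv x) x = gone
}.

Section BoundedCohomology.
Variable G : group.

Definition is_subgroup (S : G -> Prop) : Prop :=
  S (gone G) /\ (forall x y, S x -> S y -> S (gmul x y)) /\
  (forall x, S x -> S (ginv x)).

Definition in_S (S : G -> Prop) (m : nat) (x : 'I_m -> G) : Prop :=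
  forall k, S (x k).

Definition diag_act (m : nat) (g : G) (x : 'I_m -> G) : 'I_m -> G :=
  fun k => gmul g (x k).

(* Elements of C^n_b(S;R) = l^oo(S^{n+1})^S : real functions on S^{n+1}
   (represented by functions on G^{n+1}, only their values on S^{n+1} matter)
   that are bounded and invariant under the diagonal S-action. *)
Definition is_bcochain (S : G -> Prop) (n : nat) (f : ('I_n.+1 -> G) -> R) : Prop :=
  (exists M : R, forall x, in_S S x -> (Rabs (f x) <= M)%R) /\
  (forall g x, S g -> in_S S x -> f (diag_act g x) = f x).

Definition delta (n : nat) (f : ('I_n.+1 -> G) -> R) : ('I_n.+2 -> G) -> R :=
  fun x => \big[Rplus/0%R]_(j < n.+2)
             (((-1) ^ (nat_of_ord j)) * f (fun k => x (lift j k)))%R.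

Definition is_bcocycle (S : G -> Prop) (n : nat) (c : ('I_n.+1 -> G) -> R) : Prop :=
  forall x, in_S S x -> delta c x = 0%R.

Definition supnorm (S : G -> Prop) (m : nat) (f : ('I_m -> G) -> R) : Rbar :=
  Lub_Rbar (fun r => exists x, in_S S x /\ r = Rabs (f x)).

(* H^n_b(S;R) = 0, with the convention C^{-1}_b = 0
   (so H^0_b = ker delta^0 must be 0). *)
Definition Hb_vanishes (S : G -> Prop) (n : nat) : Prop :=
  forall c : ('I_n.+1 -> G) -> R, is_bcochain S c -> is_bcocycle S c ->
  match n return (('I_n.+1 -> G) -> R) -> Prop with
  | 0 => fun c => forall x, in_S S x -> c x = 0%R
  | k.+1 => fun c => exists b : ('I_k.+1 -> G) -> R,
              is_bcochain S b /\ forall x, in_S S x -> delta b x = c x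
  end c.

(* "The n-th vanishing modulus of S is <= K" : since the vanishing modulus is
   the minimal admissible constant, this says K >= 0 and K is admissible. *)
Definition vanishing_modulus_le (S : G -> Prop) (n : nat) (K : R) : Prop :=
  (0 <= K)%R /\
  forall c : ('I_n.+1 -> G) -> R, is_bcochain S c -> is_bcocycle S c ->
  match n return (('I_n.+1 -> G) -> R) -> Prop with
  | 0 => fun c => forall x, in_S S x -> c x = 0%R  (* b = 0 in C^{-1}_b = 0 *)
  | k.+1 => fun c => exists b : ('I_k.+1 -> G) -> R,
              is_bcochain S b /\ (forall x, in_S S x -> delta b x = c x) /\
              Rbar_le (supnorm S b) (Rbar_mult (Rbar.Finite K) (supnorm S c))
  end c.

End BoundedCohomology.

(* Main.v *)
Require Import Defs.
From Stdlib Require Import Reals.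
From Coquelicot Require Import Coquelicot.
From mathcomp Require Import ssreflect ssrfun ssrbool eqtype ssrnat seq fintype bigop.
From Stdlib Require Import Lra Classical.
From mathcomp Require Import boolp classical_sets filter.

Local Open Scope R_scope.

Definition islim {I : Type} (U : set_system I) (f : I -> R) (a : R) :=
  forall eps, 0 < eps -> U (fun j => Rabs (f j - a) < eps).

Lemma lim_unique {I : Type} (U : set_system I) {FU : ProperFilter U} {f : I -> R} {a b : R} :
  islim U f a -> islim U f b -> a = b.
Proof.
move=> ha hb; apply: NNPP => hne.
have he : 0 < Rabs (a - b) / 2.
  have := Rabs_pos_lt (a - b); have : a - b <> 0 by lra. move=> h1 h2.
  have := h2 h1; lra.
have [j [h1 h2]] := filter_ex (filterI (ha _ he) (hb _ he)).
move: he h1 h2; rewrite /Rabs; repeat case: Rcase_abs => ?; lra.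
Qed.

Lemma lim_ext {I : Type} (U : set_system I) {FU : Filter U} (f g : I -> R) (a : R) :
  U (fun j => f j = g j) -> islim U f a -> islim U g a.
Proof.
move=> he hf eps ep; apply: filterS (filterI he (hf _ ep)).
by move=> j [e h]; rewrite -e.
Qed.

Lemma lim_eq {I : Type} (U : set_system I) {FU : Filter U} (f g : I -> R) (a : R) :
  (forall j, f j = g j) -> islim U f a -> islim U g a.
Proof. move=> he; apply: lim_ext; apply: filterS filterT => j _; exact: he. Qed.

Lemma lim_cst {I : Type} (U : set_system I) {FU : Filter U} c :
  islim U (fun _ => c) c.
Proof.
move=> eps ep; apply: filterS filterT => j _.
rewrite Rminus_eq_0 Rabs_R0; lra.
Qed.

Lemma lim_plus {I : Type} (U : set_system I) {FU : Filter U} f g a b :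
  islim U f a -> islim U g b -> islim U (fun j => f j + g j) (a + b).
Proof.
move=> hf hg eps ep.
have e2 : 0 < eps / 2 by lra.
apply: filterS (filterI (hf _ e2) (hg _ e2)) => j [h1 h2].
move: h1 h2; rewrite /Rabs; repeat case: Rcase_abs => ?; lra.
Qed.

Lemma lim_scal {I : Type} (U : set_system I) {FU : Filter U} f a c :
  islim U f a -> islim U (fun j => c * f j) (c * a).
Proof.
move=> hf eps ep.
have hc := Rabs_pos c.
have e2 : 0 < eps / (Rabs c + 1).
  apply: Rdiv_lt_0_compat; lra.
apply: filterS (hf _ e2) => j h.
rewrite -Rmult_minus_distr_l Rabs_mult.
have h3 : eps / (Rabs c + 1) * (Rabs c + 1) = eps by field; lra.
have h4 := Rabs_pos (f j - a).
nra.
Qed.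

Lemma lim_big {I T : Type} (U : set_system I) {FU : Filter U} (r : seq T)
  (P : pred T) (F : T -> I -> R) (a : T -> R) :
  (forall t, islim U (F t) (a t)) ->
  islim U (fun j => \big[Rplus/0]_(t <- r | P t) F t j)
          (\big[Rplus/0]_(t <- r | P t) a t).
Proof.
move=> h; elim: r => [|t r IH].
  apply: (@lim_eq _ _ _ (fun _ => 0)) => [j|]; first by rewrite big_nil.
  rewrite big_nil; exact: lim_cst.
case Pt: (P t).
  apply: (@lim_eq _ _ _ (fun j => F t j + \big[Rplus/0]_(t0 <- r | P t0) F t0 j))
    => [j|]; first by rewrite big_cons Pt.
  rewrite big_cons Pt; exact: lim_plus.
apply: (@lim_eq _ _ _ (fun j => \big[Rplus/0]_(t0 <- r | P t0) F t0 j))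
    => [j|]; first by rewrite big_cons Pt.
by rewrite big_cons Pt.
Qed.

Lemma lim_ex {I : Type} (U : set_system I) (UU : UltraFilter U) (f : I -> R) B :
  U (fun j => Rabs (f j) <= B) -> exists a, islim U f a /\ Rabs a <= B.
Proof.
move=> hB.
pose S := fun r => U (fun j => r <= f j).
have hS0 : S (-B).
  apply: filterS hB => j; rewrite /Rabs; case: Rcase_abs => ?; lra.
have hub : forall r, S r -> r <= B.
  move=> r hr; apply: Rnot_lt_le => hlt.
  have [j [h1 h2]] := filter_ex (filterI hr hB).
  move: h1 h2; rewrite /Rabs; case: Rcase_abs => ?; lra.
have [a [ha1 ha2]] := completeness S (ex_intro _ B hub) (ex_intro _ _ hS0).
exists a; split.
- move=> eps he.
  have [r [Sr hr]] : exists r, S r /\ a - eps < r.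
    apply: NNPP => hn.
    have : a <= a - eps.
      apply: ha2 => r Sr; apply: Rnot_lt_le => h; apply: hn; exists r; split=> //.
    lra.
  have nS : ~ S (a + eps/2) by move=> h; have := ha1 _ h; lra.
  have [hU|hU] := in_ultra_setVsetC (fun j => a + eps/2 <= f j) UU.
    by case: nS.
  apply: filterS (filterI Sr hU) => j [h1 h2].
  have h3 := Rnot_le_lt _ _ h2.
  move: h1 h3; rewrite /Rabs; case: Rcase_abs => ?; lra.
- have h1 := ha2 B hub. have h2 := ha1 _ hS0.
  rewrite /Rabs; case: Rcase_abs => ?; lra.
Qed.

Lemma sup_ge (G : group) (S : G -> Prop) m (f : ('I_m -> G) -> R) x :
  in_S S x -> Rbar_le (Rabs (f x)) (supnorm S f).
Proof.
move=> hx; rewrite /supnorm.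
case: (Lub_Rbar_correct (fun r => exists x, in_S S x /\ r = Rabs (f x))) => h _.
by apply: h; exists x.
Qed.

Lemma sup_le (G : group) (S : G -> Prop) m (f : ('I_m -> G) -> R) M :
  (forall x, in_S S x -> Rabs (f x) <= M) -> Rbar_le (supnorm S f) M.
Proof.
move=> hM; rewrite /supnorm.
case: (Lub_Rbar_correct (fun r => exists x, in_S S x /\ r = Rabs (f x))) => _ h.
by apply: h => r [x [hx ->]]; apply: hM.
Qed.

Theorem proposition4p13 (G : group) (I : Type) (Gam : I -> G -> Prop)
    (n : nat) (K : R) :
  (forall i, is_subgroup (Gam i)) ->
  (forall i j, exists k, forall x, (Gam i x \/ Gam j x) -> Gam k x) ->
  (forall x : G, exists i, Gam i x) ->
  (forall i, Hb_vanishes (Gam i) n) ->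
  (forall i, vanishing_modulus_le (Gam i) n K) ->
  Hb_vanishes (fun _ : G => True) n.
Proof.
move=> Hsub Hdir Hcov Hvan Hmod.
have [i0 _] := Hcov (gone G).
have Htup : forall m (x : 'I_m -> G), exists i, in_S (Gam i) x.
  move=> m x.
  have : forall s : seq 'I_m, exists i, forall k, k \in s -> Gam i (x k).
    elim=> [|k s [i hi]]; first by exists i0.
    have [i' hi'] := Hcov (x k). have [j hj] := Hdir i i'.
    exists j => k'; rewrite inE => /orP [/eqP -> | hk]; apply: hj.
      by right.
    by left; apply: hi.
  move=> /(_ (enum 'I_m)) [i hi]; exists i => k; apply: hi; by rewrite mem_enum.
have restr1 : forall i m (c : ('I_m.+1 -> G) -> R),
    is_bcochain (fun _ : G => True) c -> is_bcochain (Gam i) c.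
  move=> i m c [[M hM] hinv]; split.
    by exists M => x _; apply: hM.
  by move=> g x _ _; apply: hinv.
have restr2 : forall i m (c : ('I_m.+1 -> G) -> R),
    is_bcocycle (fun _ : G => True) c -> is_bcocycle (Gam i) c.
  by move=> i m c h x _; apply: h.
case: n Hvan Hmod => [|k] Hvan Hmod c hc hcoc.
  move=> x _ /=. have [i hi] := Htup _ x.
  exact: (Hvan i c (restr1 _ _ _ hc) (restr2 _ _ _ hcoc) x hi).
have hK : 0 <= K by case: (Hmod i0).
have hB : forall i, exists b : ('I_k.+1 -> G) -> R,
    is_bcochain (Gam i) b /\ (forall x, in_S (Gam i) x -> delta b x = c x) /\
    Rbar_le (supnorm (Gam i) b) (Rbar_mult K (supnorm (Gam i) c)).
  move=> i; case: (Hmod i) => _ h.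
  exact: (h c (restr1 _ _ _ hc) (restr2 _ _ _ hcoc)).
have [bi hbi] := choice hB.
case: (hc) => [[M hM] _].
have hbd : forall i x, in_S (Gam i) x -> Rabs (bi i x) <= K * M.
  move=> i x hx.
  have h1 := @sup_ge G (Gam i) _ (bi i) x hx.
  have h2 := (hbi i).2.2.
  have h3 : Rbar_le (supnorm (Gam i) c) M.
    by apply: sup_le => y _; apply: hM.
  have h4 : Rbar_le (Rabs (c (fun _ => gone G))) (supnorm (Gam i) c).
    by apply: sup_ge => t; case: (Hsub i).
  have h5 := Rabs_pos (c (fun _ => gone G)).
  have h6 := Rabs_pos (bi i x).
  move: h1 h2 h3 h4.
  case: (supnorm (Gam i) c) => [s| |] /=; case: (supnorm (Gam i) (bi i)) => [t| |] /=;
    try tauto.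
  move=> h1 h2 h3 h4; nra.
pose Bs := fun i j => forall g, Gam i g -> Gam j g.
have F0F : Filter (filter_from setT Bs).
  apply: filter_fromT_filter; first by exists i0.
  move=> i j; have [l hl] := Hdir i j; exists l => l' hl'; split => g hg;
    apply: hl'; apply: hl; [left|right]; exact: hg.
have F0P : ProperFilter (filter_from setT Bs).
  apply: filter_from_proper => i _; exists i => g; done.
have [U [UU sub]] := ultraFilterLemma F0P.
have Uin : forall m (x : 'I_m -> G), U (fun j => in_S (Gam j) x).
  move=> m x; have [i hi] := Htup m x; apply: sub; exists i => // j hj l.
  by apply: hj; apply: hi.
have Ug : forall g, U (fun j => Gam j g).
  move=> g; apply: filterS (Uin 1%N (fun _ => g)) => j hj; exact: (hj ord0).
have hb : forall x : 'I_k.+1 -> G, exists a,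
    islim U (fun j => bi j x) a /\ Rabs a <= K * M.
  move=> x; apply: lim_ex; apply: filterS (Uin _ x) => j hj; exact: hbd.
have [b hbx] := choice hb.
exists b; split.
  split; first by exists (K * M) => x _; case: (hbx x).
  move=> g x _ _.
  apply: (@lim_unique _ U _ (fun j => bi j (diag_act g x)) _ _); first exact: (hbx _).1.
  apply: lim_ext (hbx x).1.
  apply: filterS (filterI (Uin _ x) (Ug g)) => j [hx hg].
  symmetry; apply: (hbi j).1.2 => //.
move=> x _.
apply: (@lim_unique _ U _ (fun j => delta (bi j) x) _ _).
  rewrite /delta.
  apply: (@lim_big _ _ U _ _ _ (fun (t : 'I_k.+2) j => (-1) ^ t * bi j (fun s => x (lift t s))) _) => t.
  apply: lim_scal; exact: (hbx _).1.
apply: lim_ext (lim_cst _ (c x)).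
apply: filterS (Uin _ x) => j hj.
symmetry; exact: (hbi j).2.1.
Qed.
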